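(* Let $R$ be a radically finite ring and let $P$ be a prime ideal of $R$. If $P$ has finite height, then $P$ is finitely generated.
   Context: All rings are commutative with identity. An ideal $I$ of $R$ is called radically perfect if $\mathrm{ht}(I)=\inf\{n \mid \sqrt{I}=\sqrt{(\theta_1,\dots,\theta_n)} \text{ for some } \theta_1,\dots,\theta_n\in R\}$, and moreover, if $\mathrm{ht}(I)=0$, then $\sqrt{I}=\sqrt{(\theta)}$ for some zero divisor $\theta$ of $R$. A ring $R$ is called radically finite if every prime ideal $P$ of $R$ is radically perfect and, in addition, the set of ideals of $R$ that are generated by $\mathrm{ht}(P)$ elements and have radical $P$ has a maximal member $A$ such that there are only finitely many ideals in any chain of ideals between $A$ and $P$. *)

(* Defs.v *)
From mathcomp Require Import all_boot all_algebra.
Set Implicit Arguments. Unset Strict Implicit. Unset Printing Implicit Defensive.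
Import GRing.Theory.
Local Open Scope ring_scope.

Section RadFin.
Variable R : comNzRingType.

Definition sub_eq (I J : R -> Prop) : Prop := forall x, I x <-> J x.
Definition subset (I J : R -> Prop) : Prop := forall x, I x -> J x.
Definition ssubset (I J : R -> Prop) : Prop := subset I J /\ ~ subset J I.

Definition is_ideal (I : R -> Prop) : Prop :=
  [/\ I 0, (forall x y, I x -> I y -> I (x + y)) & (forall r x, I x -> I (r * x))].

Definition prime_ideal (P : R -> Prop) : Prop :=
  [/\ is_ideal P, ~ P 1 & (forall a b, P (a * b) -> P a \/ P b)].

Definition rad (I : R -> Prop) : R -> Prop := fun x => exists k : nat, I (x ^+ k).

Definition gen (m : nat) (theta : 'I_m -> R) : R -> Prop :=
  fun x => exists r : 'I_m -> R, x = \sum_(i < m) r i * theta i.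

Definition zero_divisor (t : R) : Prop := exists y : R, y != 0 /\ t * y = 0.

Definition prime_chain (P : R -> Prop) (n : nat) : Prop :=
  exists Q : nat -> (R -> Prop),
    [/\ (forall i, (i <= n)%N -> prime_ideal (Q i)),
        (forall i, (i < n)%N -> ssubset (Q i) (Q i.+1)) & sub_eq (Q n) P].

(* ht(I) >= n, where ht(I) = inf of ht(Q) over primes Q containing I
   (inf of the empty set = infinity) *)
Definition height_ge (I : R -> Prop) (n : nat) : Prop :=
  forall Q, prime_ideal Q -> subset I Q -> prime_chain Q n.

Definition height_eq (I : R -> Prop) (n : nat) : Prop :=
  height_ge I n /\ ~ height_ge I n.+1.

Definition radgen_ge (I : R -> Prop) (n : nat) : Prop :=
  forall (m : nat) (theta : 'I_m -> R), sub_eq (rad I) (rad (gen theta)) -> (n <= m)%N.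

Definition radically_perfect (I : R -> Prop) : Prop :=
  (forall n, height_ge I n <-> radgen_ge I n) /\
  (height_eq I 0 ->
     exists t : R, zero_divisor t /\
       sub_eq (rad I) (rad (gen (fun _ : 'I_1 => t)))).

Definition finitely_many (C : (R -> Prop) -> Prop) : Prop :=
  exists (k : nat) (f : 'I_k -> (R -> Prop)), forall J, C J -> exists i, sub_eq J (f i).

Definition chain_between (A P : R -> Prop) (C : (R -> Prop) -> Prop) : Prop :=
  (forall J, C J -> [/\ is_ideal J, subset A J & subset J P]) /\
  (forall J K, C J -> C K -> subset J K \/ subset K J).

Definition rad_gen_set (P : R -> Prop) (h : nat) (B : R -> Prop) : Prop :=
  (exists theta : 'I_h -> R, sub_eq B (gen theta)) /\ sub_eq (rad B) P.

Definition radically_finite : Prop :=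
  forall P, prime_ideal P ->
    radically_perfect P /\
    (forall h, height_eq P h ->
       exists A, [/\ rad_gen_set P h A,
         (forall B, rad_gen_set P h B -> subset A B -> subset B A) &
         (forall C, chain_between A P C -> finitely_many C)]).

Definition finitely_generated (I : R -> Prop) : Prop :=
  exists (m : nat) (theta : 'I_m -> R), sub_eq I (gen theta).

End RadFin.

(* Main.v *)
Require Import Defs.
From mathcomp Require Import all_boot all_algebra.
From Stdlib Require Import Classical ClassicalEpsilon.

Set Implicit Arguments. Unset Strict Implicit. Unset Printing Implicit Defensive.
Import GRing.Theory.
Local Open Scope ring_scope.

Section Aux.
Variable R : comNzRingType.

Definition gens (s : seq R) : R -> Prop :=
  fun y => exists r : nat -> R, y = \sum_(i < size s) r i * s`_i.

Lemma conv m (F : nat -> R) y :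
  (exists r : nat -> R, y = \sum_(i < m) r i * F i) <->
  (exists r : 'I_m -> R, y = \sum_(i < m) r i * F i).
Proof.
split.
  by case=> r ->; exists (fun i => r (val i)).
case=> r ->; exists (fun n => if insub n is Some i then r i else 0).
by apply: eq_bigr => i _; rewrite valK.
Qed.

Lemma gens_ideal s : is_ideal (gens s).
Proof.
split.
- by exists (fun _ => 0); rewrite big1 // => i _; rewrite mul0r.
- move=> x y [r1 ->] [r2 ->]; exists (fun n => r1 n + r2 n).
  by rewrite -big_split; apply: eq_bigr => i _; rewrite mulrDl.
- move=> a x [r ->]; exists (fun n => a * r n).
  by rewrite mulr_sumr; apply: eq_bigr => i _; rewrite mulrA.
Qed.

Lemma gens_rcons s x y :
  gens (rcons s x) y <-> exists z r, gens s z /\ y = z + r * x.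
Proof.
rewrite /gens size_rcons; split.
  case=> r ->; rewrite big_ord_recr /=.
  exists (\sum_(i < size s) r i * (rcons s x)`_i), (r (size s)); split.
    exists r; apply: eq_bigr => i _; by rewrite nth_rcons ltn_ord.
  by rewrite nth_rcons ltnn eqxx.
case=> z [a [[r ->] ->]].
exists (fun n => if n == size s then a else r n).
rewrite big_ord_recr /= eqxx nth_rcons ltnn eqxx; congr (_ + _).
apply: eq_bigr => i _; by rewrite nth_rcons ltn_ord (ltn_eqF (ltn_ord i)).
Qed.

Lemma gens_sub_rcons s x : Defs.subset (gens s) (gens (rcons s x)).
Proof. by move=> y Hy; apply/gens_rcons; exists y, 0; rewrite mul0r addr0. Qed.

Lemma gens_rcons_mem s x : gens (rcons s x) x.
Proof.
apply/gens_rcons; exists 0, 1; split; last by rewrite add0r mul1r.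
by case: (gens_ideal s).
Qed.

Lemma gens_gen m (theta : 'I_m -> R) y :
  gen theta y <-> gens [seq theta i | i <- enum 'I_m] y.
Proof.
rewrite /gens size_map size_enum_ord conv /gen.
have E : forall r : 'I_m -> R, \sum_(i < m) r i * theta i =
   \sum_(i < m) r i * [seq theta i | i <- enum 'I_m]`_i.
  move=> r; apply: eq_bigr => i _.
  by rewrite (nth_map i) ?size_enum_ord // nth_ord_enum.
by split; case=> r ->; exists r; rewrite E.
Qed.

Lemma gens_fg s (P : R -> Prop) : sub_eq P (gens s) -> finitely_generated P.
Proof.
move=> H; exists (size s), (fun i => s`_i) => y.
by rewrite H /gens conv.
Qed.

End Aux.

Theorem theorem2p1 (R : comNzRingType) (P : R -> Prop) :
  radically_finite R -> prime_ideal P ->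
  (exists h : nat, height_eq P h) ->
  finitely_generated P.
Proof.
move=> HR HP [h Hh].
have [_ HA] := HR P HP.
have [A [[[theta HAt] HrA] _ Hch]] := HA h Hh.
case: HP => [[P0 PD PM] _ _].
have AP : Defs.subset A P by move=> x Ax; apply/HrA; exists 1%N; rewrite expr1.
apply: NNPP => nfg.
pose s0 := [seq theta i | i <- enum 'I_h].
have s0A : Defs.subset (gens s0) A by move=> y /gens_gen /HAt.
have As0 : Defs.subset A (gens s0) by move=> y /HAt /gens_gen.
have Hn : forall s, exists x, Defs.subset (gens s) P -> P x /\ ~ gens s x.
  move=> s; case: (classic (Defs.subset (gens s) P)) => [sP|nsP]; last first.
    by exists 0.
  case: (classic (exists x, P x /\ ~ gens s x)) => [[x Hx]|Hno].
    by exists x.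
  exfalso; apply: nfg; apply: (@gens_fg _ s) => y; split; last by apply: sP.
  move=> Py; apply: NNPP => ng; apply: Hno; by exists y.
pose nx s := proj1_sig (constructive_indefinite_description _ (Hn s)).
have nxP s : Defs.subset (gens s) P -> P (nx s) /\ ~ gens s (nx s).
  exact: (proj2_sig (constructive_indefinite_description _ (Hn s))).
pose sj j := iter j (fun s => rcons s (nx s)) s0.
have inv j : Defs.subset (gens (sj j)) P.
  elim: j => [|j IH]; first by move=> y /s0A /AP.
  move=> y /= /gens_rcons [z [a [Hz ->]]].
  apply: PD; first exact: IH.
  by apply: PM; case: (nxP _ IH).
have mono j k : (j <= k)%N -> Defs.subset (gens (sj j)) (gens (sj k)).
  move=> jk; rewrite -(subnKC jk); elim: (k - j)%N => [|d IH].
    by rewrite addn0.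
  by move=> y /IH; rewrite addnS /=; apply: gens_sub_rcons.
pose C := fun J => exists j, sub_eq J (gens (sj j)).
have chC : chain_between A P C.
  split.
    move=> J [j HJ]; split.
    - case: (gens_ideal (sj j)) => g0 gD gM; split.
      + by apply/HJ.
      + by move=> x y /HJ ? /HJ ?; apply/HJ; apply: gD.
      + by move=> r x /HJ ?; apply/HJ; apply: gM.
    - by move=> y /As0 /(mono 0%N j (leq0n _)) /HJ.
    - by move=> y /HJ /inv.
  move=> J K [j HJ] [k HK]; case: (leqP j k) => jk.
    by left=> y /HJ /(mono _ _ jk) /HK.
  by right=> y /HK /(mono _ _ (ltnW jk)) /HJ.
have [k [f Hf]] := Hch C chC.
have key a b i : (a < b)%N -> sub_eq (gens (sj a)) (f i) ->
    sub_eq (gens (sj b)) (f i) -> False.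
  move=> ab Ha Hb.
  have [_ nin] := nxP _ (inv a).
  apply: nin; apply/Ha; apply/Hb; apply: (mono a.+1 b ab).
  exact: gens_rcons_mem.
have Hg : forall n : 'I_k.+1, exists i, sub_eq (gens (sj n)) (f i).
  by move=> n; apply: Hf; exists n.
pose g n := proj1_sig (constructive_indefinite_description _ (Hg n)).
have gP (n : 'I_k.+1) : sub_eq (gens (sj n)) (f (g n)).
  exact: (proj2_sig (constructive_indefinite_description _ (Hg n))).
case: (boolP (injectiveb g)) => [/injectiveP inj|/injectivePn [x [y xy gxy]]].
  by have := @leq_card _ _ g inj; rewrite !card_ord ltnn.
case: (ltngtP x y) => [xy'|yx'|e]; last by rewrite (val_inj e) eqxx in xy.
  by apply: (key _ _ _ xy' (gP x)); rewrite gxy; apply: gP.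
by apply: (key _ _ _ yx' (gP y)); rewrite -gxy; apply: gP.
Qed.
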